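(* Let $N\geq 1$, let $U\in M_{2N}(\mathbb{C})$ be unitary with $U^{\rm T}=-U$, and let $\Phi^U_{4N}$ be the map defined on block matrices $X=\begin{pmatrix} X_{11} & X_{12}\\ X_{21} & X_{22}\end{pmatrix}$ ($X_{kl}\in M_{2N}(\mathbb{C})$) by $$\Phi^U_{4N}(X)=\frac{1}{2N}\begin{pmatrix} \mathbb{I}_{2N}\,\mathrm{Tr}X_{22} & -\big(X_{12}+UX_{21}^{\rm T}U^\dagger\big)\\ -\big(X_{21}+UX_{12}^{\rm T}U^\dagger\big) & \mathbb{I}_{2N}\,\mathrm{Tr}X_{11}\end{pmatrix}.$$ Let $P^+_{4N}=\frac{1}{4N}\sum_{k,l=1}^{4N}|k\rangle\langle l|\otimes|k\rangle\langle l|$, $W^U_{4N}=(\mathrm{id}\otimes\Phi^U_{4N})P^+_{4N}$, and for $\lambda\in[0,1]$ let $\rho_\lambda=\frac{\lambda}{(4N)^2}\mathbb{I}_{4N}\otimes\mathbb{I}_{4N}+(1-\lambda)P^+_{4N}$ be the isotropic state. If $\rho_\lambda$ is entangled, equivalently if $\lambda<\frac{4N}{4N+1}$, then $\mathrm{Tr}(W^U_{4N}\rho_\lambda)<0$.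
   Context: $\{|k\rangle\}$ is the standard basis of $\mathbb{C}^{4N}$; $\mathrm{id}$ is the identity map on $M_{4N}(\mathbb{C})$. *)

(* Defs.v *)
From HB Require Import structures.
From mathcomp Require Import all_boot all_order all_algebra.
From mathcomp Require Export spectral.
From mathcomp Require Import complex mxtens.
From mathcomp Require Import reals.
Set Implicit Arguments. Unset Strict Implicit. Unset Printing Implicit Defensive.
Import Order.TTheory GRing.Theory Num.Theory.
Local Open Scope ring_scope.

Definition adjmx (C : numClosedFieldType) m n (A : 'M[C]_(m, n)) : 'M[C]_(n, m) :=
  (map_mx Num.conj A)^T.

Definition PhiU (C : numClosedFieldType) n (U : 'M[C]_n) (X : 'M[C]_(n + n))
  : 'M[C]_(n + n) :=
  (n%:R)^-1 *: block_mx
    ((\tr (drsubmx X))%:M)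
    (- (ursubmx X + U *m (dlsubmx X)^T *m adjmx U))
    (- (dlsubmx X + U *m (ursubmx X)^T *m adjmx U))
    ((\tr (ulsubmx X))%:M).

Definition Pplus (C : numClosedFieldType) d : 'M[C]_(d * d) :=
  (d%:R)^-1 *: \sum_(k < d) \sum_(l < d) tensmx (delta_mx k l) (delta_mx k l).

Definition id_tens (C : numClosedFieldType) d (Phi : 'M[C]_d -> 'M[C]_d)
  (Y : 'M[C]_(d * d)) : 'M[C]_(d * d) :=
  \sum_(k < d) \sum_(l < d) tensmx (delta_mx k l)
     (Phi (\matrix_(i, j) Y (mxtens_index (k, i)) (mxtens_index (l, j)))).

Definition WU (C : numClosedFieldType) n (U : 'M[C]_n) : 'M[C]_((n + n) * (n + n)) :=
  id_tens (PhiU U) (Pplus C (n + n)).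

Definition iso_state (C : numClosedFieldType) d (lam : C) : 'M[C]_(d * d) :=
  (lam / (d%:R ^+ 2)) *: tensmx (1%:M : 'M[C]_d) (1%:M : 'M[C]_d)
  + (1 - lam) *: Pplus C d.

(* Main.v *)
Require Import Defs.
From HB Require Import structures.
From mathcomp Require Import all_boot all_order all_algebra.
From mathcomp Require Import spectral complex mxtens reals.
From mathcomp Require Import ring.
Import Order.TTheory GRing.Theory Num.Theory.
Local Open Scope ring_scope.
Set Implicit Arguments. Unset Strict Implicit. Unset Printing Implicit Defensive.

Section S.
Variable C : numClosedFieldType.

Lemma sum_delta2 d (f : 'I_d -> 'I_d -> C) a b :
  \sum_k \sum_l ((a == k) && (b == l))%:R * f k l = f a b.
Proof.
rewrite (bigD1 a) //= eqxx /= (bigD1 b) //= eqxx mul1r.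
have -> : \sum_(i < d | i != b) (b == i)%:R * f a i = 0.
  apply: big1 => l nlb; have -> : (b == l) = false by rewrite eq_sym; exact: negbTE.
  by rewrite mul0r.
rewrite addr0 big1 ?addr0 // => k nka.
have -> : (a == k) = false by rewrite eq_sym; exact: negbTE.
by apply: big1 => l _; rewrite mul0r.
Qed.

Lemma sum_delta2' d (f : 'I_d -> 'I_d -> C) a b :
  \sum_k \sum_l f k l * ((l == b) && (k == a))%:R = f a b.
Proof.
rewrite -(sum_delta2 f a b); apply: eq_bigr => k _; apply: eq_bigr => l _.
by rewrite mulrC andbC (eq_sym l) (eq_sym k).
Qed.

Lemma sum_tens m n (F : 'I_(m * n) -> C) :
  \sum_x F x = \sum_a \sum_i F (mxtens_index (a, i)).
Proof.
rewrite pair_big /=.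
rewrite (reindex (@mxtens_index m n)) /=; last first.
  by exists (@mxtens_unindex m n) => x _; rewrite (mxtens_indexK, mxtens_unindexK).
by apply: eq_bigr => -[a i].
Qed.

Lemma tr_mulE d (A B : 'M[C]_d) : \tr (A *m B) = \sum_x \sum_y A x y * B y x.
Proof. by rewrite /mxtrace; apply: eq_bigr => x _; rewrite mxE. Qed.

Lemma Pplus_entry d a i b j :
  Pplus C d (mxtens_index (a, i)) (mxtens_index (b, j))
  = d%:R^-1 * ((i == a) && (j == b))%:R.
Proof.
rewrite /Pplus mxE summxE; congr (_ * _).
under eq_bigr do rewrite summxE.
under eq_bigr do under eq_bigr do rewrite tensmxE [delta_mx _ _ a b]mxE [delta_mx _ _ i j]mxE.
by rewrite (sum_delta2 (fun k l => ((i == k) && (j == l))%:R)).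
Qed.

Definition Yb d (a b : 'I_d) : 'M[C]_d :=
  \matrix_(i, j) (Pplus C d) (mxtens_index (a, i)) (mxtens_index (b, j)).

Lemma Yb_entry d (a b i j : 'I_d) : Yb a b i j = d%:R^-1 * ((i == a) && (j == b))%:R.
Proof. by rewrite mxE Pplus_entry. Qed.

Lemma WU_entry n (U : 'M[C]_n) (a i b j : 'I_(n + n)) :
  WU U (mxtens_index (a, i)) (mxtens_index (b, j)) = PhiU U (Yb a b) i j.
Proof.
rewrite /WU /id_tens summxE.
under eq_bigr do rewrite summxE.
under eq_bigr do under eq_bigr do rewrite tensmxE [delta_mx _ _ a b]mxE.
by rewrite (sum_delta2 (fun k l => PhiU U _ i j)).
Qed.

Lemma ul_entry m1 m2 n1 n2 (A : 'M[C]_(m1+m2, n1+n2)) i j :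
  ulsubmx A i j = A (lshift m2 i) (lshift n2 j). Proof. by rewrite !mxE. Qed.
Lemma ur_entry m1 m2 n1 n2 (A : 'M[C]_(m1+m2, n1+n2)) i j :
  ursubmx A i j = A (lshift m2 i) (rshift n1 j). Proof. by rewrite !mxE. Qed.
Lemma dl_entry m1 m2 n1 n2 (A : 'M[C]_(m1+m2, n1+n2)) i j :
  dlsubmx A i j = A (rshift m1 i) (lshift n2 j). Proof. by rewrite !mxE. Qed.
Lemma dr_entry m1 m2 n1 n2 (A : 'M[C]_(m1+m2, n1+n2)) i j :
  drsubmx A i j = A (rshift m1 i) (rshift n1 j). Proof. by rewrite !mxE. Qed.

Lemma nat_neq0 n : (0 < n)%N -> n%:R != 0 :> C.
Proof. by move=> n0; rewrite pnatr_eq0 -lt0n. Qed.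

Lemma trPhi n (U : 'M[C]_n) X : (0 < n)%N -> \tr (PhiU U X) = \tr X.
Proof.
move=> n0; rewrite /PhiU mxtraceZ mxtrace_block !mxtrace_scalar.
rewrite -[in RHS](submxK X) mxtrace_block -mulrnDl.
by rewrite -(mulr_natl (\tr (drsubmx X) + \tr (ulsubmx X)) n) mulrA mulVf ?nat_neq0 // mul1r addrC.
Qed.

Lemma trYaa d (a : 'I_d) : \tr (Yb a a) = d%:R^-1.
Proof.
rewrite /mxtrace; under eq_bigr do rewrite Yb_entry andbb.
rewrite -mulr_sumr (bigD1 a) //= eqxx big1 ?addr0 ?mulr1 // => i /negbTE ->.
by [].
Qed.

Lemma E_ll n (U : 'M[C]_n) a b :
  PhiU U (Yb (lshift n a) (lshift n b)) (lshift n a) (lshift n b) = 0.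
Proof.
rewrite /PhiU mxE block_mxEul.
have -> : \tr (drsubmx (Yb (lshift n a) (lshift n b))) = 0.
  by rewrite /mxtrace big1 // => i _; rewrite dr_entry Yb_entry eq_rlshift mulr0.
by rewrite mxE mul0rn mulr0.
Qed.

Lemma E_rr n (U : 'M[C]_n) a b :
  PhiU U (Yb (rshift n a) (rshift n b)) (rshift n a) (rshift n b) = 0.
Proof.
rewrite /PhiU mxE block_mxEdr.
have -> : \tr (ulsubmx (Yb (rshift n a) (rshift n b))) = 0.
  by rewrite /mxtrace big1 // => i _; rewrite ul_entry Yb_entry eq_lrshift mulr0.
by rewrite mxE mul0rn mulr0.
Qed.

Lemma E_lr n (U : 'M[C]_n) a b :
  PhiU U (Yb (lshift n a) (rshift n b)) (lshift n a) (rshift n b)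
  = - (n%:R^-1 * (n + n)%:R^-1).
Proof.
rewrite /PhiU mxE block_mxEur.
have -> : dlsubmx (Yb (lshift n a) (rshift n b)) = 0.
  by apply/matrixP => i j; rewrite dl_entry Yb_entry eq_rlshift mulr0 mxE.
rewrite trmx0 mulmx0 mul0mx addr0 mxE ur_entry Yb_entry !eqxx /= mulr1.
by rewrite mulrN.
Qed.

Lemma E_rl n (U : 'M[C]_n) a b :
  PhiU U (Yb (rshift n a) (lshift n b)) (rshift n a) (lshift n b)
  = - (n%:R^-1 * (n + n)%:R^-1).
Proof.
rewrite /PhiU mxE block_mxEdl.
have -> : ursubmx (Yb (rshift n a) (lshift n b)) = 0.
  by apply/matrixP => i j; rewrite ur_entry Yb_entry eq_lrshift mulr0 mxE.
rewrite trmx0 mulmx0 mul0mx addr0 mxE dl_entry Yb_entry !eqxx /= mulr1.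
by rewrite mulrN.
Qed.

Lemma S2 n (U : 'M[C]_n) : (0 < n)%N ->
  \sum_(a < n + n) \sum_(b < n + n) PhiU U (Yb a b) a b = -1.
Proof.
move=> n0; pose c : C := - (n%:R^-1 * (n + n)%:R^-1).
have h1 : forall a : 'I_n,
    \sum_(b < n+n) PhiU U (Yb (lshift n a) b) (lshift n a) b = c *+ n.
  move=> a; rewrite sumr_add.
  have -> : \sum_(i < n) PhiU U (Yb (lshift n a) (lshift n i)) (lshift n a) (lshift n i) = 0.
    by apply: big1 => b _; exact: E_ll.
  rewrite add0r (eq_bigr (fun _ => c)); last by move=> b _; exact: E_lr.
  by rewrite sumr_const card_ord.
have h2 : forall a : 'I_n,
    \sum_(b < n+n) PhiU U (Yb (rshift n a) b) (rshift n a) b = c *+ n.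
  move=> a; rewrite sumr_add.
  have -> : \sum_(i < n) PhiU U (Yb (rshift n a) (rshift n i)) (rshift n a) (rshift n i) = 0.
    by apply: big1 => b _; exact: E_rr.
  rewrite addr0 (eq_bigr (fun _ => c)); last by move=> b _; exact: E_rl.
  by rewrite sumr_const card_ord.
rewrite sumr_add (eq_bigr (fun=> c *+ n)); last by move=> a _; exact: h1.
rewrite [X in _ + X](eq_bigr (fun=> c *+ n)); last by move=> a _; exact: h2.
rewrite !sumr_const !card_ord /c -!mulrnA -mulrnDr.
rewrite -(mulr_natr _ (n * n + n * n)) !natrD !natrM.
have hn := nat_neq0 n0; set x := (n%:R : C) in hn *.
have hnn : x + x != 0 by rewrite /x -natrD nat_neq0 // addn_gt0 n0.
by field; rewrite hnn hn.
Qed.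

Lemma tens11 d : tensmx (1%:M : 'M[C]_d) (1%:M : 'M[C]_d) = 1%:M.
Proof.
apply/matrixP => x y; case: (mxtens_indexP x) => a i; case: (mxtens_indexP y) => b j.
rewrite tensmxE !mxE (inj_eq (can_inj (@mxtens_indexK d d))) xpair_eqE.
by case: (a == b); case: (i == j); rewrite ?mulr1n ?mulr0n ?mulr1 ?mulr0.
Qed.

Lemma trW n (U : 'M[C]_n) : (0 < n)%N -> \tr (WU U) = 1.
Proof.
move=> n0; rewrite {1}/mxtrace sum_tens.
rewrite (eq_bigr (fun a => \tr (PhiU U (Yb a a)))); last first.
  by move=> a _; apply: eq_bigr => i _; rewrite WU_entry.
under eq_bigr do rewrite trPhi // trYaa.
rewrite sumr_const card_ord -(mulr_natr ((n + n)%:R^-1 : C) (n + n)) mulVf //.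
by rewrite nat_neq0 // addn_gt0 n0.
Qed.

Lemma trWP n (U : 'M[C]_n) : (0 < n)%N ->
  \tr (WU U *m Pplus C (n + n)) = - (n + n)%:R^-1.
Proof.
move=> n0; rewrite tr_mulE sum_tens.
have E : forall a : 'I_(n + n),
  \sum_i \sum_y WU U (mxtens_index (a, i)) y * Pplus C (n + n) y (mxtens_index (a, i))
  = (n + n)%:R^-1 * \sum_b PhiU U (Yb a b) a b.
  move=> a.
  under eq_bigr do rewrite sum_tens.
  under eq_bigr do under eq_bigr do under eq_bigr do rewrite WU_entry Pplus_entry mulrA.
  rewrite exchange_big /= mulr_sumr; apply: eq_bigr => b _.
  by rewrite (sum_delta2' (fun i j => PhiU U (Yb a b) i j * (n + n)%:R^-1)) mulrC.
rewrite (eq_bigr _ (fun a _ => E a)) -mulr_sumr S2 //.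
by rewrite mulrN1.
Qed.
End S.

Local Open Scope complex_scope.
Theorem lemma2 (R : realType) (N : nat) (U : 'M[R[i]]_(N.*2))
  (lam : R) :
  (1 <= N)%N ->
  U \is unitarymx ->
  U^T = - U ->
  0 <= lam <= 1 ->
  lam < (4 * N)%:R / ((4 * N)%:R + 1) ->
  \tr (WU U *m iso_state (N.*2 + N.*2) (lam%:C)) < 0.
Proof.
move=> N1 _ _ _ hlam.
have n0 : (0 < N.*2)%N by rewrite double_gt0.
rewrite /iso_state mulmxDr mxtraceD -scalemxAr mxtraceZ -scalemxAr mxtraceZ tens11 mulmx1 trW // trWP //.

have -> : (N.*2 + N.*2 = 4 * N)%N by rewrite -!mul2n -mulnDl.
set D : R := (4 * N)%:R.
have hD : 0 < D by rewrite /D ltr0n muln_gt0.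
have -> : ((4 * N)%:R : R[i]) = D%:C by rewrite /D rmorph_nat.
have -> : lam%:C / D%:C ^+ 2 * 1 + (1 - lam%:C) * - D%:C^-1
    = ((lam * (D + 1) - D) / D ^+ 2)%:C.
  rewrite !(rmorphM, rmorphB, rmorphD, fmorphV, rmorphXn, rmorph1).
  field.
  by rewrite pnatr_eq0 -lt0n.
have h : lam * (D + 1) < D by rewrite -ltr_pdivlMr // ltr_wpDl.
rewrite -(rmorph0 (@real_complex R)) ltcR pmulr_llt0 ?invr_gt0 ?exprn_gt0 //.
by rewrite subr_lt0.
Qed.
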